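(* Let $\mathbb C$ be a homological category with finite colimits, and let $w\colon W\to A$, $x\colon X\to A$, $y\colon Y\to A$ be morphisms in $\mathbb C$ with $w$ a monomorphism. If $m\colon (W+X)\times_W(W+Y)\to A$ is an internal multiplication $X\times Y\to A$ over $(W,w)$, then $m\circ\ker(\gamma_w)=0$.
   Context: A homological category is a regular pointed category in which the Split Short Five Lemma holds. Notation: $\iota_i$ are coproduct injections, $[a,b]$ copairing, $\langle a,b\rangle$ pairing, $1$, $0$ identity and zero morphisms. $(W+X)\times_W(W+Y)$ is the pullback of $[1,0]\colon W+X\to W$ and $[1,0]\colon W+Y\to W$, with projections $\pi_1,\pi_2$. An internal multiplication $X\times Y\to A$ over $(W,w)$ is a morphism $m\colon (W+X)\times_W(W+Y)\to A$ with $m\langle 1,\iota_1[1,0]\rangle=[w,x]$ and $m\langle \iota_1[1,0],1\rangle=[w,y]$. $A_3=A\times_{A/X}A\times_{A/Y}A$ is the limit of $A\xrightarrow{\mathsf{coker}(x)}A/X\xleftarrow{\mathsf{coker}(x)}A\xrightarrow{\mathsf{coker}(y)}A/Y\xleftarrow{\mathsf{coker}(y)}A$, and $\gamma_w=\langle [w,x]\pi_1,[w,0]\pi_1,[w,y]\pi_2\rangle\colon (W+X)\times_W(W+Y)\to A_3$. *)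

(* Defs.v *)
Set Implicit Arguments.
Unset Strict Implicit.

Record Category := {
  Ob :> Type;
  Hom : Ob -> Ob -> Type;
  idm : forall A, Hom A A;
  comp : forall A B C, Hom B C -> Hom A B -> Hom A C;
  comp_assoc : forall A B C D (h : Hom C D) (g : Hom B C) (f : Hom A B),
      comp h (comp g f) = comp (comp h g) f;
  comp_id_l : forall A B (f : Hom A B), comp (idm B) f = f;
  comp_id_r : forall A B (f : Hom A B), comp f (idm A) = f
}.

Arguments Hom {_} _ _.
Arguments idm {_} _.
Arguments comp {_ _ _ _} _ _.
Notation "g \o f" := (comp g f) (at level 40, left associativity).

Section Notions.
Context {C : Category}.

Definition IsMono {A B : C} (f : Hom A B) : Prop :=
  forall T (g h : Hom T A), f \o g = f \o h -> g = h.

Definition IsIso {A B : C} (f : Hom A B) : Prop :=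
  exists g : Hom B A, g \o f = idm A /\ f \o g = idm B.

Definition IsTerminal (T : C) : Prop :=
  forall A : C, exists f : Hom A T, forall g : Hom A T, g = f.
Definition IsInitial (I : C) : Prop :=
  forall A : C, exists f : Hom I A, forall g : Hom I A, g = f.
Definition IsZeroObj (Z : C) : Prop := IsInitial Z /\ IsTerminal Z.

Definition Pointed : Prop := exists Z : C, IsZeroObj Z.

Definition IsZeroMor {A B : C} (f : Hom A B) : Prop :=
  exists (Z : C) (g : Hom A Z) (h : Hom Z B), IsZeroObj Z /\ f = h \o g.

Definition IsProduct {A B P : C} (p1 : Hom P A) (p2 : Hom P B) : Prop :=
  forall T (f : Hom T A) (g : Hom T B),
    exists h : Hom T P, (p1 \o h = f /\ p2 \o h = g) /\
      forall h' : Hom T P, p1 \o h' = f -> p2 \o h' = g -> h' = h.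

Definition IsCoproduct {A B S : C} (i1 : Hom A S) (i2 : Hom B S) : Prop :=
  forall T (f : Hom A T) (g : Hom B T),
    exists h : Hom S T, (h \o i1 = f /\ h \o i2 = g) /\
      forall h' : Hom S T, h' \o i1 = f -> h' \o i2 = g -> h' = h.

Definition IsEqualizer {A B E : C} (f g : Hom A B) (e : Hom E A) : Prop :=
  f \o e = g \o e /\
  forall T (t : Hom T A), f \o t = g \o t ->
    exists u : Hom T E, e \o u = t /\ forall u', e \o u' = t -> u' = u.

Definition IsCoequalizer {A B Q : C} (f g : Hom A B) (q : Hom B Q) : Prop :=
  q \o f = q \o g /\
  forall T (t : Hom B T), t \o f = t \o g ->
    exists u : Hom Q T, u \o q = t /\ forall u', u' \o q = t -> u' = u.

Definition IsPullback {A B D P : C} (f : Hom A D) (g : Hom B D)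
    (p1 : Hom P A) (p2 : Hom P B) : Prop :=
  f \o p1 = g \o p2 /\
  forall T (a : Hom T A) (b : Hom T B), f \o a = g \o b ->
    exists h : Hom T P, (p1 \o h = a /\ p2 \o h = b) /\
      forall h' : Hom T P, p1 \o h' = a -> p2 \o h' = b -> h' = h.

Definition IsKernel {A B K : C} (f : Hom A B) (k : Hom K A) : Prop :=
  IsZeroMor (f \o k) /\
  forall T (t : Hom T A), IsZeroMor (f \o t) ->
    exists u : Hom T K, k \o u = t /\ forall u', k \o u' = t -> u' = u.

Definition IsCokernel {A B Q : C} (f : Hom A B) (q : Hom B Q) : Prop :=
  IsZeroMor (q \o f) /\
  forall T (t : Hom B T), IsZeroMor (t \o f) ->
    exists u : Hom Q T, u \o q = t /\ forall u', u' \o q = t -> u' = u.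

Definition HasFiniteLimits : Prop :=
  (exists T : C, IsTerminal T) /\
  (forall A B : C, exists (P : C) (p1 : Hom P A) (p2 : Hom P B), IsProduct p1 p2) /\
  (forall (A B : C) (f g : Hom A B), exists (E : C) (e : Hom E A), IsEqualizer f g e).

Definition HasFiniteColimits : Prop :=
  (exists I : C, IsInitial I) /\
  (forall A B : C, exists (S : C) (i1 : Hom A S) (i2 : Hom B S), IsCoproduct i1 i2) /\
  (forall (A B : C) (f g : Hom A B), exists (Q : C) (q : Hom B Q), IsCoequalizer f g q).

Definition IsRegularEpi {A B : C} (f : Hom A B) : Prop :=
  exists (R : C) (a b : Hom R A), IsCoequalizer a b f.

Definition Regular : Prop :=
  HasFiniteLimits /\
  (forall (A B R : C) (f : Hom A B) (a b : Hom R A), IsPullback f f a b ->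
     exists (Q : C) (q : Hom A Q), IsCoequalizer a b q) /\
  (forall (A B D P : C) (f : Hom A D) (g : Hom B D) (p1 : Hom P A) (p2 : Hom P B),
     IsRegularEpi f -> IsPullback f g p1 p2 -> IsRegularEpi p2).

Definition SplitShortFiveLemma : Prop :=
  forall (K A B K' A' B' : C)
    (k : Hom K A) (p : Hom A B) (s : Hom B A)
    (k' : Hom K' A') (p' : Hom A' B') (s' : Hom B' A')
    (u : Hom K K') (v : Hom A A') (w : Hom B B'),
    IsKernel p k -> p \o s = idm B ->
    IsKernel p' k' -> p' \o s' = idm B' ->
    v \o k = k' \o u -> p' \o v = w \o p -> v \o s = s' \o w ->
    IsIso u -> IsIso w -> IsIso v.

Definition Homological : Prop := Pointed /\ Regular /\ SplitShortFiveLemma.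

End Notions.

(* Main.v *)
Require Import Defs.
Section H.
Context {C : Category}.

Lemma ZM_l {A B D : C} (f : Hom A B) (g : Hom B D) : IsZeroMor f -> IsZeroMor (g \o f).
Proof. intros [Z [a [b [HZ ->]]]]. exists Z, a, (g \o b). split; auto. apply comp_assoc. Qed.

Lemma ZM_r {A B D : C} (f : Hom A B) (g : Hom D A) : IsZeroMor f -> IsZeroMor (f \o g).
Proof. intros [Z [a [b [HZ ->]]]]. exists Z, (a \o g), b. split; auto. symmetry; apply comp_assoc. Qed.

Lemma ZM_uniq {A B : C} (f g : Hom A B) : IsZeroMor f -> IsZeroMor g -> f = g.
Proof.
  intros [Z1 [a1 [b1 [[I1 T1] ->]]]] [Z2 [a2 [b2 [[I2 T2] ->]]]].
  destruct (I1 Z2) as [r Hr].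
  destruct (I1 B) as [s Hs].
  destruct (T2 A) as [t Ht].
  assert (E1 : b1 = b2 \o r) by (rewrite (Hs b1); apply eq_sym, Hs).
  assert (E2 : a2 = r \o a1) by (rewrite (Ht a2); apply eq_sym, Ht).
  rewrite E1, E2. symmetry. apply comp_assoc.
Qed.

Lemma ZM_ex (HP : Pointed (C := C)) (A B : C) : exists z : Hom A B, IsZeroMor z.
Proof.
  destruct HP as [Z [HI HT]]. destruct (HI B) as [b _]. destruct (HT A) as [a _].
  exists (b \o a), Z, a, b. split; auto. split; auto.
Qed.

Lemma ZM_mono (HP : Pointed (C := C)) {T W A : C} (w : Hom W A) (f : Hom T W) :
  IsMono w -> IsZeroMor (w \o f) -> IsZeroMor f.
Proof.
  intros Hw Hz. destruct (ZM_ex HP T W) as [z Hz'].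
  assert (f = z) as -> by (apply Hw, ZM_uniq; auto; apply ZM_l; auto). auto.
Qed.

Lemma iso_id (A : C) : IsIso (idm A).
Proof. exists (idm A). split; apply comp_id_l. Qed.

Lemma joint (HP : Pointed (C := C)) (HL : HasFiniteLimits (C := C))
  (HS : SplitShortFiveLemma (C := C))
  (K KK A : C) (p1 p2 : Hom KK K) (Hp : IsProduct p1 p2)
  (z : Hom K K) (Hz : IsZeroMor z) (i1 i2 : Hom K KK)
  (Hi11 : p1 \o i1 = idm K) (Hi12 : p2 \o i1 = z)
  (Hi21 : p1 \o i2 = z) (Hi22 : p2 \o i2 = idm K)
  (f : Hom KK A) : IsZeroMor (f \o i1) -> IsZeroMor (f \o i2) -> IsZeroMor f.
Proof.
  intros F1 F2.
  destruct (ZM_ex HP KK A) as [zA HzA].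
  destruct HL as [_ [_ HE]].
  destruct (HE _ _ f zA) as [E [e [He1 He2]]].
  destruct (He2 _ i1) as [a [Ha _]]. { apply ZM_uniq; auto. apply ZM_r; auto. }
  destruct (He2 _ i2) as [b [Hb _]]. { apply ZM_uniq; auto. apply ZM_r; auto. }
  assert (Hmono : IsMono e).
  { intros T g h Hgh. destruct (He2 _ (e \o g)) as [u [_ Hu]].
    { rewrite !comp_assoc, He1; reflexivity. }
    rewrite (Hu g eq_refl), (Hu h (eq_sym Hgh)). reflexivity. }
  assert (Hk1 : IsKernel p2 i1).
  { split. { rewrite Hi12; auto. }
    intros T t Ht. exists (p1 \o t). split.
    - destruct (Hp T (p1 \o t) (p2 \o t)) as [h [_ Hh]].
      transitivity h; [apply Hh | symmetry; apply Hh; reflexivity].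
      + rewrite comp_assoc, Hi11, comp_id_l; reflexivity.
      + rewrite comp_assoc, Hi12. apply ZM_uniq; auto. apply ZM_r; auto.
    - intros u' Hu'. rewrite <- Hu', comp_assoc, Hi11, comp_id_l; auto. }
  assert (Hk2 : IsKernel (p2 \o e) a).
  { split. { rewrite <- comp_assoc, Ha, Hi12; auto. }
    intros T t Ht. destruct Hk1 as [_ Hk1].
    destruct (Hk1 T (e \o t)) as [u [Hu1 Hu2]]. { rewrite comp_assoc; auto. }
    exists u. split.
    - apply Hmono. rewrite comp_assoc, Ha; auto.
    - intros u' Hu'. apply Hu2. rewrite <- Ha, <- comp_assoc, Hu'. auto. }
  assert (Hiso : IsIso e).
  { apply (HS K E K K KK K a (p2 \o e) b i1 p2 i2 (idm K) e (idm K)); auto.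
    - rewrite <- comp_assoc, Hb; auto.
    - rewrite comp_id_r; auto.
    - rewrite comp_id_l; auto.
    - rewrite comp_id_r; auto.
    - apply iso_id.
    - apply iso_id. }
  destruct Hiso as [ei [_ Hei]].
  assert (f = zA) as ->; auto.
  rewrite <- (comp_id_r f), <- (comp_id_r zA), <- Hei, !comp_assoc, He1. reflexivity.
Qed.
End H.

(* Lemma 1.4.  All objects built from universal properties (coproducts,
   pullback, cokernels, the limit A_3, the kernel of gamma_w, and the
   induced morphisms) are quantified over arbitrary choices satisfying
   their universal property / defining equations. *)
Theorem lemma1p4 (C : Category)
  (HC : Homological (C := C)) (Hcolim : HasFiniteColimits (C := C))
  (W X Y A : C) (w : Hom W A) (x : Hom X A) (y : Hom Y A)
  (Hw : IsMono w)
  (* W + X and W + Y *)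
  (SX : C) (iW : Hom W SX) (iX : Hom X SX) (HSX : IsCoproduct iW iX)
  (SY : C) (jW : Hom W SY) (jY : Hom Y SY) (HSY : IsCoproduct jW jY)
  (* [1,0] : W + X -> W and [1,0] : W + Y -> W *)
  (rX : Hom SX W) (HrX1 : rX \o iW = idm W) (HrX2 : IsZeroMor (rX \o iX))
  (rY : Hom SY W) (HrY1 : rY \o jW = idm W) (HrY2 : IsZeroMor (rY \o jY))
  (* (W+X) x_W (W+Y) *)
  (P : C) (pi1 : Hom P SX) (pi2 : Hom P SY) (HP : IsPullback rX rY pi1 pi2)
  (* [w,x], [w,0] : W+X -> A and [w,y] : W+Y -> A *)
  (wx : Hom SX A) (Hwx1 : wx \o iW = w) (Hwx2 : wx \o iX = x)
  (w0 : Hom SX A) (Hw01 : w0 \o iW = w) (Hw02 : IsZeroMor (w0 \o iX))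
  (wy : Hom SY A) (Hwy1 : wy \o jW = w) (Hwy2 : wy \o jY = y)
  (* <1, iota_1 [1,0]> : W+X -> P and <iota_1 [1,0], 1> : W+Y -> P *)
  (eX : Hom SX P) (HeX1 : pi1 \o eX = idm SX) (HeX2 : pi2 \o eX = jW \o rX)
  (eY : Hom SY P) (HeY1 : pi1 \o eY = iW \o rY) (HeY2 : pi2 \o eY = idm SY)
  (* internal multiplication m *)
  (m : Hom P A) (Hm1 : m \o eX = wx) (Hm2 : m \o eY = wy)
  (* cokernels A -> A/X, A -> A/Y *)
  (QX : C) (cx : Hom A QX) (Hcx : IsCokernel x cx)
  (QY : C) (cy : Hom A QY) (Hcy : IsCokernel y cy)
  (* A_3 = A x_{A/X} A x_{A/Y} A, limit of A -> A/X <- A -> A/Y <- A *)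
  (A3 : C) (l1 l2 l3 : Hom A3 A)
  (HA3c : cx \o l1 = cx \o l2 /\ cy \o l2 = cy \o l3)
  (HA3u : forall (T : C) (a1 a2 a3 : Hom T A),
      cx \o a1 = cx \o a2 -> cy \o a2 = cy \o a3 ->
      exists h : Hom T A3, (l1 \o h = a1 /\ l2 \o h = a2 /\ l3 \o h = a3) /\
        forall h' : Hom T A3, l1 \o h' = a1 -> l2 \o h' = a2 -> l3 \o h' = a3 -> h' = h)
  (* gamma_w = < [w,x] pi1, [w,0] pi1, [w,y] pi2 > *)
  (gam : Hom P A3)
  (Hg1 : l1 \o gam = wx \o pi1) (Hg2 : l2 \o gam = w0 \o pi1)
  (Hg3 : l3 \o gam = wy \o pi2)
  (* ker(gamma_w) *)
  (K : C) (k : Hom K P) (Hk : IsKernel gam k) :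
  IsZeroMor (m \o k).
Proof.
  destruct HC as [HPt [[HL [_ _]] HS]].
  assert (HL' := HL). destruct HL' as [_ [HProd _]].
  destruct Hk as [Hgk _].
  assert (Ew0 : w0 = w \o rX).
  { destruct (HSX A w (w0 \o iX)) as [h [_ Hh]].
    transitivity h; [apply Hh; auto | symmetry; apply Hh].
    - rewrite <- comp_assoc, HrX1, comp_id_r; reflexivity.
    - rewrite <- comp_assoc. apply ZM_uniq; auto. apply ZM_l; auto. }
  assert (R1 : IsZeroMor (rX \o (pi1 \o k))).
  { apply (ZM_mono HPt w); auto. rewrite comp_assoc, comp_assoc, <- Ew0, <- Hg2.
    rewrite <- comp_assoc. apply ZM_l; auto. }
  assert (R2 : IsZeroMor (rY \o (pi2 \o k))).
  { rewrite comp_assoc, <- (proj1 HP), <- comp_assoc; auto. }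
  assert (X1 : IsZeroMor (wx \o (pi1 \o k))).
  { rewrite comp_assoc, <- Hg1, <- comp_assoc. apply ZM_l; auto. }
  assert (Y1 : IsZeroMor (wy \o (pi2 \o k))).
  { rewrite comp_assoc, <- Hg3, <- comp_assoc. apply ZM_l; auto. }
  destruct (HProd K K) as [KK [p1 [p2 Hp]]].
  destruct (ZM_ex HPt K K) as [z Hz].
  destruct (Hp K (idm K) z) as [i1 [[Hi11 Hi12] _]].
  destruct (Hp K z (idm K)) as [i2 [[Hi21 Hi22] _]].
  destruct (Hp K (idm K) (idm K)) as [d [[Hd1 Hd2] _]].
  destruct HP as [HPc HPu].
  destruct (HPu KK (pi1 \o k \o p1) (pi2 \o k \o p2)) as [G [[HG1 HG2] _]].
  { apply ZM_uniq; rewrite comp_assoc; apply ZM_r;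
      (first [exact R1 | exact R2 | rewrite <- comp_assoc; assumption | rewrite comp_assoc; assumption]). }
  assert (EGd : G \o d = k).
  { destruct (HPu K (pi1 \o k) (pi2 \o k)) as [h [_ Hh]].
    { rewrite !comp_assoc, HPc; reflexivity. }
    transitivity h; [apply Hh | symmetry; apply Hh; auto].
    - rewrite comp_assoc, HG1, <- comp_assoc, Hd1, comp_id_r; reflexivity.
    - rewrite comp_assoc, HG2, <- comp_assoc, Hd2, comp_id_r; reflexivity. }
  rewrite <- EGd, comp_assoc. apply ZM_r.
  apply (@joint C HPt HL HS K KK A p1 p2 Hp z Hz i1 i2 Hi11 Hi12 Hi21 Hi22).
  - assert (E1 : G \o i1 = eX \o (pi1 \o k)).
    { destruct (HPu K (pi1 \o k) (pi2 \o k \o z)) as [h [_ Hh]].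
      { apply ZM_uniq; [exact R1 | rewrite comp_assoc; apply ZM_r; exact R2]. }
      transitivity h; [apply Hh | symmetry; apply Hh].
      - rewrite comp_assoc, HG1, <- comp_assoc, Hi11, comp_id_r; reflexivity.
      - rewrite comp_assoc, HG2, <- comp_assoc, Hi12; reflexivity.
      - rewrite comp_assoc, HeX1, comp_id_l; reflexivity.
      - rewrite comp_assoc, HeX2. apply ZM_uniq.
        + rewrite <- comp_assoc. apply ZM_l; auto.
        + apply ZM_l; auto. }
    rewrite <- comp_assoc, E1, comp_assoc, Hm1; auto.
  - assert (E2 : G \o i2 = eY \o (pi2 \o k)).
    { destruct (HPu K (pi1 \o k \o z) (pi2 \o k)) as [h [_ Hh]].
      { apply ZM_uniq; [rewrite comp_assoc; apply ZM_r; exact R1 | exact R2]. }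
      transitivity h; [apply Hh | symmetry; apply Hh].
      - rewrite comp_assoc, HG1, <- comp_assoc, Hi21; reflexivity.
      - rewrite comp_assoc, HG2, <- comp_assoc, Hi22, comp_id_r; reflexivity.
      - rewrite comp_assoc, HeY1. apply ZM_uniq.
        + rewrite <- comp_assoc. apply ZM_l; auto.
        + apply ZM_l; auto.
      - rewrite comp_assoc, HeY2, comp_id_l; reflexivity. }
    rewrite <- comp_assoc, E2, comp_assoc, Hm2; auto.
Qed.
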